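(* Let $G$ be a group with identity $e$, $A$ a set with at least two elements, and $\tau: A^G\to A^G$ a lazy cellular automaton. If $\mathrm{ord}(\tau) < \infty$, then the period of $\tau$ is $1$.
   Context: $A^G$ is the set of maps $G \to A$ with shift action $(g\cdot x)(h) := x(hg)$. A cellular automaton is a map $\tau : A^G \to A^G$ with a finite $S \subseteq G$ and $\mu : A^S \to A$ such that $\tau(x)(g) = \mu((g\cdot x)|_S)$. $\tau$ is lazy if there is such a local defining map $\mu : A^S \to A$ with $e \in S$ and $p \in A^S$ such that for all $z \in A^S$: $\mu(z) = z(e)$ iff $z \neq p$. $\tau^k$ is the $k$-fold composition, $\tau^0$ the identity; $\mathrm{ord}(\tau) := |\{\tau^k : k \in \mathbb{N}\}|$ with $\mathbb{N}=\{0,1,2,\dots\}$. If $\mathrm{ord}(\tau)<\infty$, the index $m \in \mathbb{N}$ and period $n \in \mathbb{Z}_+$ of $\tau$ are the smallest values such that $\tau^m = \tau^{m+n}$. *)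

(* Defs.v *)
From Stdlib Require Import List Arith.
Import ListNotations.

Record Group := {
  gcar :> Type;
  gmul : gcar -> gcar -> gcar;
  gone : gcar;
  ginv : gcar -> gcar;
  gmul_assoc : forall x y z, gmul x (gmul y z) = gmul (gmul x y) z;
  gmul_1l : forall x, gmul gone x = x;
  gmul_1r : forall x, gmul x gone = x;
  gmul_Vl : forall x, gmul (ginv x) x = gone;
  gmul_Vr : forall x, gmul x (ginv x) = gone
}.

Section CA.
Variables (G : Group) (A : Type).

Definition config := G -> A.

Definition shift (g : G) (x : config) : config := fun h => x (gmul G h g).

Definition finite_subset (S : G -> Prop) : Prop :=
  exists l : list G, forall g, S g -> In g l.

Definition restrict (S : G -> Prop) (x : config) : {g : G | S g} -> A :=
  fun s => x (proj1_sig s).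

Definition local_rule (tau : config -> config) (S : G -> Prop)
  (mu : ({g : G | S g} -> A) -> A) : Prop :=
  finite_subset S /\ forall (x : config) (g : G), tau x g = mu (restrict S (shift g x)).

Definition cellular_automaton (tau : config -> config) : Prop :=
  exists (S : G -> Prop) (mu : ({g : G | S g} -> A) -> A), local_rule tau S mu.

Definition lazy_CA (tau : config -> config) : Prop :=
  exists (S : G -> Prop) (mu : ({g : G | S g} -> A) -> A),
    local_rule tau S mu /\
    exists (He : S (gone G)) (p : {g : G | S g} -> A),
      forall z, mu z = z (exist S (gone G) He) <-> z <> p.

Definition cpow (tau : config -> config) (k : nat) : config -> config :=
  Nat.iter k (fun f => fun x => tau (f x)) (fun x => x).

Definition finite_order (tau : config -> config) : Prop :=
  exists l : list (config -> config), forall k, In (cpow tau k) l.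

Definition index_period (tau : config -> config) (m n : nat) : Prop :=
  0 < n /\ cpow tau m = cpow tau (m + n) /\
  (forall m' n', 0 < n' -> cpow tau m' = cpow tau (m' + n') -> m <= m') /\
  (forall n', 0 < n' -> cpow tau m = cpow tau (m + n') -> n <= n').

End CA.

(* Main.v *)
Require Import Defs.
From Stdlib Require Import List Arith Lia Classical FunctionalExtensionality.
Import ListNotations.

Lemma cpow_add (G : Group) (A : Type) (tau : config G A -> config G A) n m x :
  cpow G A tau (n + m) x = cpow G A tau n (cpow G A tau m x).
Proof. induction n; simpl; [reflexivity| now rewrite IHn]. Qed.

Lemma key (G : Group) (A : Type) (tau : config G A -> config G A)
  (hlazy : lazy_CA G A tau) (y : config G A) n :
  0 < n -> cpow G A tau n y = y -> tau y = y.
Proof.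
  intros Hn Hy.
  destruct hlazy as [S [mu [[_ Hrule] [He [p Hp]]]]].
  set (a := p (exist S (gone G) He)).
  set (b := mu p).
  assert (Hab : b <> a).
  { intro E. apply (proj1 (Hp p) E). reflexivity. }
  assert (Hch : forall x g, tau x g <> x g -> x g = a /\ tau x g = b).
  { intros x g H. rewrite Hrule in *.
    destruct (classic (restrict G A S (shift G A g x) = p)) as [E|E].
    - rewrite E. split; [|reflexivity].
      unfold a. rewrite <- E. unfold restrict, shift; simpl. idtac.
      now rewrite gmul_1l.
    - exfalso. apply H. rewrite (proj2 (Hp _) E).
      unfold restrict, shift; simpl. now rewrite gmul_1l. }
  assert (Hstay : forall x g, x g = b -> tau x g = b).
  { intros x g H. destruct (classic (tau x g = x g)) as [E|E].
    - congruence.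
    - destruct (Hch x g E) as [H1 _]. congruence. }
  assert (Hiter : forall j x g, x g = b -> cpow G A tau j x g = b).
  { induction j; intros x g H; simpl; auto. }
  extensionality g.
  apply NNPP. intro E.
  destruct (Hch y g E) as [H1 H2].
  assert (H3 : cpow G A tau (n - 1 + 1) y g = b).
  { rewrite cpow_add. apply Hiter. simpl. exact H2. }
  replace (n - 1 + 1) with n in H3 by lia.
  rewrite Hy in H3. congruence.
Qed.

Lemma nodup_map_in {X Y : Type} (f : X -> Y) (s : list X) :
  NoDup s -> (forall i j, In i s -> In j s -> f i = f j -> i = j) -> NoDup (map f s).
Proof.
  induction s as [|x s IH]; intros Hs Hinj; simpl; constructor.
  - inversion Hs; subst. intro Hin. apply in_map_iff in Hin.
    destruct Hin as [z [Hz Hzin]].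
    assert (z = x) by (apply Hinj; simpl; auto). subst. contradiction.
  - inversion Hs; subst. apply IH; auto. intros; apply Hinj; simpl; auto.
Qed.

Theorem proposition2 (G : Group) (A : Type)
  (hA : exists a b : A, a <> b)
  (tau : config G A -> config G A)
  (hlazy : lazy_CA G A tau)
  (hord : finite_order G A tau) :
  exists m : nat, index_period G A tau m 1.
Proof.
  set (P := fun m => exists n, 0 < n /\ cpow G A tau m = cpow G A tau (m + n)).
  assert (HP : exists k, P k).
  { destruct hord as [l Hl].
    apply NNPP. intro Hno.
    set (s := seq 0 (S (length l))).
    assert (ND : NoDup (map (cpow G A tau) s)).
    { apply nodup_map_in. apply seq_NoDup.
      intros i j _ _ E.
      destruct (lt_eq_lt_dec i j) as [[Hlt|Heq]|Hlt]; auto; exfalso; apply Hno.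
      - exists i, (j - i). split; [lia|]. now replace (i + (j - i)) with j by lia.
      - exists j, (i - j). split; [lia|]. now replace (j + (i - j)) with i by lia. }
    apply NoDup_incl_length with (l' := l) in ND.
    - rewrite length_map in ND. unfold s in ND. rewrite length_seq in ND. lia.
    - intros f Hf. apply in_map_iff in Hf. destruct Hf as [k [<- _]]. apply Hl. }
  assert (Hmin : forall k, P k -> exists m, P m /\ forall m', P m' -> m <= m').
  { intro k. induction k as [k IH] using lt_wf_ind. intro Hk.
    destruct (classic (exists m', m' < k /\ P m')) as [[m' [H1 H2]]|H].
    - exact (IH m' H1 H2).
    - exists k. split; auto. intros m' Hm'.
      destruct (le_lt_dec k m'); auto. exfalso. apply H. eauto. }
  destruct HP as [k Hk]. destruct (Hmin k Hk) as [m [[n [Hn Hmn]] Hm]].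
  exists m. unfold index_period. split; [lia|]. split.
  - extensionality x.
    assert (E : tau (cpow G A tau m x) = cpow G A tau m x).
    { apply (key G A tau hlazy _ n Hn).
      rewrite <- cpow_add. rewrite Nat.add_comm. now rewrite <- Hmn. }
    rewrite Nat.add_comm. simpl. now rewrite E.
  - split.
    + intros m' n' H1 H2. apply Hm. exists n'. auto.
    + intros; lia.
Qed.
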